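(* Let $k\subseteq K$ be fields with $\operatorname{char}k=p>0$, let $m$ be a natural number, let $X$ be a power series indeterminate over $K$, and let $D$ be an integral domain with $k+X^mK[[X]]\subseteq D\subseteq K[[X]]$. Let $M=D\cap XK[[X]]$, and regard $D/M$ as a subfield of $K$ via the map $K[[X]]\to K$, $f\mapsto f(0)$. (i) If $k\subseteq K$ is a root extension, then $D$ is a quasilocal AV-domain whose integral closure is $K[[X]]$. (ii) If $k\subseteq K$ is a bounded root extension, then $D$ is a quasilocal API-domain whose integral closure is $K[[X]]$. (iii) Assuming $k\subseteq K$ is a root extension, $(D,M)$ is an API-domain if and only if $D/M\subseteq K$ is a bounded root extension. (iv) If moreover $[K:k]<\infty$, then $D$ is a complete local AV-domain in case (i), and a complete local API-domain in case (ii).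
   Context: An extension of commutative rings $R\subseteq S$ is a root extension if for each $s\in S$ there is a natural number $n$ with $s^n\in R$, and a bounded root extension if there is a single natural number $n$ with $s^n\in R$ for all $s\in S$. An integral domain $D$ is an AV-domain if for all nonzero $a,b\in D$ there is a natural number $n$ with $a^n\mid b^n$ or $b^n\mid a^n$ in $D$. $D$ is an API-domain if for every nonempty subset $\{d_\alpha\}$ of $D\setminus\{0\}$ there is $n$ with the ideal $(\{d_\alpha^n\})$ principal. Quasilocal means having a unique maximal ideal; local means Noetherian and quasilocal; complete local means local and complete in the $M$-adic topology. The integral closure is taken in the quotient field. *)

(* Defs.v *)
From HB Require Import structures.
From mathcomp Require Import all_boot all_order all_algebra.
Set Implicit Arguments. Unset Strict Implicit. Unset Printing Implicit Defensive.
Import Order.TTheory GRing.Theory Num.Theory.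
Local Open Scope ring_scope.

Section PS.
Variable K : fieldType.

(** K[[X]] : the power series f = sum_n (f n) X^n *)
Definition ps := nat -> K.

Definition ps_zero : ps := fun _ => 0.
Definition ps_one : ps := fun n => if n is 0%N then 1 else 0.
Definition ps_const (c : K) : ps := fun n => if n is 0%N then c else 0.
Definition ps_add (f g : ps) : ps := fun n => f n + g n.
Definition ps_opp (f : ps) : ps := fun n => - f n.
Definition ps_sub (f g : ps) : ps := ps_add f (ps_opp g).
Definition ps_mul (f g : ps) : ps :=
  fun n => \sum_(i < n.+1) f i * g (n - i)%N.
Fixpoint ps_exp (f : ps) (n : nat) : ps :=
  if n is n'.+1 then ps_mul f (ps_exp f n') else ps_one.
Fixpoint ps_sum (n : nat) (F : nat -> ps) : ps :=
  if n is n'.+1 then ps_add (ps_sum n' F) (F n') else ps_zero.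

Definition is_subfield (k : K -> Prop) : Prop :=
  k 1 /\ (forall x y, k x -> k y -> k (x - y)) /\
  (forall x y, k x -> k y -> k (x * y)) /\
  (forall x, k x -> x != 0 -> k x^-1).

Definition root_ext (A B : K -> Prop) : Prop :=
  forall x, B x -> exists n : nat, (0 < n)%N /\ A (x ^+ n).
Definition bounded_root_ext (A B : K -> Prop) : Prop :=
  exists n : nat, (0 < n)%N /\ forall x, B x -> A (x ^+ n).
Definition fullK : K -> Prop := fun _ => True.

Definition finite_degree (k : K -> Prop) : Prop :=
  exists (n : nat) (e : nat -> K), forall x : K,
    exists c : nat -> K, (forall i, k (c i)) /\ x = \sum_(i < n) c i * e i.

(** D is a subring of K[[X]] (hence an integral domain) *)
Definition is_subring (D : ps -> Prop) : Prop :=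
  D ps_one /\ (forall f g, D f -> D g -> D (ps_sub f g)) /\
  (forall f g, D f -> D g -> D (ps_mul f g)).

Definition k_plus_XmKX (k : K -> Prop) (m : nat) : ps -> Prop :=
  fun f => exists c g, k c /\ (forall n, (n < m)%N -> g n = 0) /\
                       f = ps_add (ps_const c) g.

Definition maxM (D : ps -> Prop) : ps -> Prop := fun f => D f /\ f 0%N = 0.

(** D/M seen inside K via f |-> f(0) *)
Definition residue (D : ps -> Prop) : K -> Prop :=
  fun c => exists f, D f /\ f 0%N = c.

Definition ideal (D I : ps -> Prop) : Prop :=
  (forall x, I x -> D x) /\ I ps_zero /\
  (forall x y, I x -> I y -> I (ps_add x y)) /\
  (forall d x, D d -> I x -> I (ps_mul d x)).

Definition max_ideal (D I : ps -> Prop) : Prop :=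
  ideal D I /\ ~ I ps_one /\
  (forall J, ideal D J -> (forall x, I x -> J x) ->
     (forall x, J x <-> I x) \/ J ps_one).

Definition unique_max_ideal (D I : ps -> Prop) : Prop :=
  max_ideal D I /\ forall J, max_ideal D J -> forall x, J x <-> I x.

Definition quasilocal (D : ps -> Prop) : Prop := exists I, unique_max_ideal D I.

Definition gen_ideal (D S : ps -> Prop) : ps -> Prop :=
  fun x => forall I, ideal D I -> (forall s, S s -> I s) -> I x.

Definition principal (D I : ps -> Prop) : Prop :=
  exists g, D g /\ forall x, I x <-> exists d, D d /\ x = ps_mul d g.

Definition dvd_in (D : ps -> Prop) (a b : ps) : Prop :=
  exists c, D c /\ b = ps_mul a c.

Definition AV_domain (D : ps -> Prop) : Prop :=
  forall a b, D a -> D b -> a <> ps_zero -> b <> ps_zero ->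
    exists n : nat, (0 < n)%N /\
      (dvd_in D (ps_exp a n) (ps_exp b n) \/ dvd_in D (ps_exp b n) (ps_exp a n)).

Definition API_domain (D : ps -> Prop) : Prop :=
  forall S : ps -> Prop, (forall s, S s -> D s /\ s <> ps_zero) ->
    (exists s, S s) ->
    exists n : nat, (0 < n)%N /\
      principal D (gen_ideal D (fun y => exists s, S s /\ y = ps_exp s n)).

(** The element a/b (a, b in D, b <> 0) of the quotient field of D is
    integral over D: (a/b)^n + c_{n-1}(a/b)^{n-1} + ... + c_0 = 0 with
    c_i in D, i.e. (multiplying by b^n) a^n + sum_i c_i a^i b^(n-i) = 0. *)
Definition integral_frac (D : ps -> Prop) (a b : ps) : Prop :=
  exists (n : nat) (c : nat -> ps), (0 < n)%N /\ (forall i, D (c i)) /\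
    ps_add (ps_exp a n)
      (ps_sum n (fun i => ps_mul (c i) (ps_mul (ps_exp a i) (ps_exp b (n - i)))))
    = ps_zero.

(** The integral closure of D (in its quotient field, which sits inside the
    quotient field of K[[X]]; a/b represents f in K[[X]] iff a = b f) is K[[X]]:
    every f in K[[X]] lies in Frac(D) and is integral over D, and every element
    of Frac(D) integral over D lies in K[[X]]. *)
Definition integral_closure_is_KX (D : ps -> Prop) : Prop :=
  (forall f : ps, exists a b, D a /\ D b /\ b <> ps_zero /\ a = ps_mul b f /\
                              integral_frac D a b) /\
  (forall a b, D a -> D b -> b <> ps_zero -> integral_frac D a b ->
     exists f : ps, a = ps_mul b f).

Definition noetherian (D : ps -> Prop) : Prop :=
  forall I, ideal D I -> exists (n : nat) (g : nat -> ps),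
    forall x, I x <-> gen_ideal D (fun y => exists i, (i < n)%N /\ y = g i) x.

Fixpoint ideal_pow (D I : ps -> Prop) (t : nat) : ps -> Prop :=
  if t is t'.+1 then
    gen_ideal D (fun y => exists a b, ideal_pow D I t' a /\ I b /\ y = ps_mul a b)
  else D.

Definition complete_adic (D I : ps -> Prop) : Prop :=
  forall u : nat -> ps, (forall i, D (u i)) ->
    (forall t, exists N, forall i j, (N <= i)%N -> (N <= j)%N ->
        ideal_pow D I t (ps_sub (u i) (u j))) ->
    exists d, D d /\ forall t, exists N, forall i, (N <= i)%N ->
        ideal_pow D I t (ps_sub (u i) d).

Definition complete_local (D : ps -> Prop) : Prop :=
  noetherian D /\ exists I, unique_max_ideal D I /\ complete_adic D I.

End PS.

(* Main.v *)
Require Import Defs.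
From mathcomp Require Import all_boot all_order all_algebra.
From HB Require Import structures.
From mathcomp Require Import boolp zify ring.
Set Implicit Arguments. Unset Strict Implicit. Unset Printing Implicit Defensive.
Import Order.TTheory GRing.Theory Num.Theory.
Local Open Scope ring_scope.

HB.instance Definition _ (K : fieldType) := gen_eqMixin (ps K).
HB.instance Definition _ (K : fieldType) := gen_choiceMixin (ps K).

Section PsRing.
Variable K : fieldType.
Implicit Types f g h : ps K.

Lemma psext f g : (forall n, f n = g n) -> f = g.
Proof. move=> H; exact: funext H. Qed.

Lemma ps_addA : associative (@ps_add K).
Proof. by move=> f g h; apply: psext => n; rewrite /ps_add addrA. Qed.
Lemma ps_addC : commutative (@ps_add K).
Proof. by move=> f g; apply: psext => n; rewrite /ps_add addrC. Qed.
Lemma ps_add0 : left_id (@ps_zero K) (@ps_add K).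
Proof. by move=> f; apply: psext => n; rewrite /ps_add /ps_zero add0r. Qed.
Lemma ps_addN : left_inverse (@ps_zero K) (@ps_opp K) (@ps_add K).
Proof. by move=> f; apply: psext => n; rewrite /ps_add /ps_zero /ps_opp addNr. Qed.

HB.instance Definition _ := GRing.isZmodule.Build (ps K) ps_addA ps_addC ps_add0 ps_addN.

Definition tr (N : nat) f : {poly K} := \poly_(i < N) f i.

Lemma ps_mul_trE N n f g : (n < N)%N -> ps_mul f g n = (tr N f * tr N g)`_n.
Proof.
move=> nN; rewrite coefM /ps_mul; apply: eq_bigr => [[i /=]]; rewrite ltnS => Hi _.
rewrite /tr !coef_poly ifT; last by apply: leq_ltn_trans nN.
by rewrite ifT // (leq_ltn_trans _ nN) // leq_subr.
Qed.

Lemma coefM_ext (R P Q : {poly K}) n :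
  (forall i, (i <= n)%N -> P`_i = Q`_i) -> (R * P)`_n = (R * Q)`_n.
Proof.
move=> H; rewrite !coefM; apply: eq_bigr => [[i /=]] Hi _.
by rewrite H // leq_subr.
Qed.

Lemma coefM_extl (R P Q : {poly K}) n :
  (forall i, (i <= n)%N -> P`_i = Q`_i) -> (P * R)`_n = (Q * R)`_n.
Proof. by move=> H; rewrite ![_ * R]mulrC; apply: coefM_ext. Qed.

Lemma tr_mul N n f g : (n < N)%N -> (tr N (ps_mul f g))`_n = (tr N f * tr N g)`_n.
Proof. by move=> H; rewrite /tr coef_poly H (ps_mul_trE _ _ H). Qed.

Lemma ps_mulA : associative (@ps_mul K).
Proof.
move=> f g h; apply: psext => n.
rewrite (ps_mul_trE (N:=n.+1)) // (ps_mul_trE (N:=n.+1)) //.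
rewrite (@coefM_ext _ _ (tr n.+1 g * tr n.+1 h)); last first.
  by move=> i Hi; rewrite tr_mul.
rewrite [RHS](@coefM_extl _ _ (tr n.+1 f * tr n.+1 g)); last first.
  by move=> i Hi; rewrite tr_mul.
by rewrite mulrA.
Qed.

Lemma ps_mulC : commutative (@ps_mul K).
Proof.
move=> f g; apply: psext => n.
by rewrite (ps_mul_trE (N:=n.+1)) // (ps_mul_trE (N:=n.+1)) // mulrC.
Qed.

Lemma ps_mul1 : left_id (@ps_one K) (@ps_mul K).
Proof.
move=> f; apply: psext => n; rewrite /ps_mul big_ord_recl /= subn0 mul1r.
rewrite big1 ?addr0 // => i _; by rewrite /ps_one /= mul0r.
Qed.

Lemma ps_mulDl : left_distributive (@ps_mul K) (@ps_add K).
Proof.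
move=> f g h; apply: psext => n; rewrite /ps_mul /ps_add -big_split /=.
by apply: eq_bigr => i _; rewrite mulrDl.
Qed.

Lemma ps_one_neq0 : (@ps_one K) != @ps_zero K.
Proof.
apply/eqP => /(congr1 (fun f => f 0%N)); rewrite /ps_one /ps_zero.
by move/eqP; rewrite oner_eq0.
Qed.

HB.instance Definition _ := GRing.Zmodule_isComNzRing.Build (ps K)
  ps_mulA ps_mulC ps_mul1 ps_mulDl ps_one_neq0.

End PsRing.

Section Ps2.
Variable K : fieldType.
Implicit Types f g h : ps K.

Lemma mulE f g : f * g = ps_mul f g. Proof. by []. Qed.
Lemma addE f g : f + g = ps_add f g. Proof. by []. Qed.
Lemma zeroE : (0 : ps K) = @ps_zero K. Proof. by []. Qed.
Lemma oneE : (1 : ps K) = @ps_one K. Proof. by []. Qed.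
Lemma subE f g : f - g = ps_sub f g. Proof. by []. Qed.
Lemma coefD f g n : (f + g) n = f n + g n. Proof. by []. Qed.
Lemma coefN f n : (- f) n = - f n. Proof. by []. Qed.
Lemma coefB f g n : (f - g) n = f n - g n. Proof. by []. Qed.
Lemma coef0 n : (0 : ps K) n = 0. Proof. by []. Qed.
Lemma coef1 n : (1 : ps K) n = if n is 0%N then 1 else 0. Proof. by []. Qed.
Lemma expE f n : ps_exp f n = f ^+ n.
Proof. by elim: n => // n IH; rewrite exprS /= IH. Qed.
Lemma sumE n (F : nat -> ps K) : ps_sum n F = \sum_(i < n) F i.
Proof. by elim: n => [|n IH]; rewrite ?big_ord0 // big_ord_recr /= IH. Qed.
Lemma coef_sum I (r : seq I) (P : pred I) (F : I -> ps K) n :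
  (\sum_(i <- r | P i) F i) n = \sum_(i <- r | P i) F i n.
Proof. by apply: (big_morph (fun f : ps K => f n)) => //. Qed.

Lemma coefM0 f g : (f * g) 0%N = f 0%N * g 0%N.
Proof. by rewrite mulE /ps_mul big_ord_recl big_ord0 addr0 subn0. Qed.

Lemma coefX0 f n : (f ^+ n) 0%N = (f 0%N) ^+ n.
Proof. by elim: n => [|n IH]; rewrite ?expr0 // !exprS coefM0 IH. Qed.

Definition vb (r : nat) f := forall i, (i < r)%N -> f i = 0.

Lemma vb_mul a b f g : vb a f -> vb b g -> vb (a + b) (f * g).
Proof.
move=> Hf Hg n Hn; rewrite mulE /ps_mul big1 // => [[i /=]] Hi _.
case: (ltnP i a) => Ha; first by rewrite Hf // mul0r.
by rewrite Hg ?mulr0 //; lia.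
Qed.

Lemma coef_mul_vb a b f g : vb a f -> vb b g -> (f * g) (a + b)%N = f a * g b.
Proof.
move=> Hf Hg; rewrite mulE /ps_mul.
have Ha : (a < (a + b).+1)%N by lia.
rewrite (bigD1 (Ordinal Ha)) //= big1 ?addr0; first by congr (_ * g _); lia.
move=> [i /= Hi] Hne.
have Hia : i != a by apply: contra Hne => /eqP Hia; apply/eqP; apply: val_inj => /=.
case: (ltnP i a) => H; first by rewrite Hf // mul0r.
by rewrite Hg ?mulr0 //; lia.
Qed.

Lemma vb_le a b f : (a <= b)%N -> vb b f -> vb a f.
Proof. by move=> Hab H i Hi; apply: H; apply: leq_trans Hab. Qed.

Lemma vb0 f : vb 0 f. Proof. by []. Qed.

Lemma vb_mulr a f g : vb a f -> vb a (g * f).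
Proof. by move=> H; rewrite -[a]add0n; apply: vb_mul. Qed.
Lemma vb_mull a f g : vb a f -> vb a (f * g).
Proof. by move=> H; rewrite mulrC; apply: vb_mulr. Qed.
Lemma vb_add a f g : vb a f -> vb a g -> vb a (f + g).
Proof. by move=> H1 H2 i Hi; rewrite coefD H1 ?H2 ?addr0. Qed.
Lemma vb_opp a f : vb a f -> vb a (- f).
Proof. by move=> H1 i Hi; rewrite coefN H1 ?oppr0. Qed.
Lemma vb_sub a f g : vb a f -> vb a g -> vb a (f - g).
Proof. by move=> H1 H2; apply: vb_add => //; apply: vb_opp. Qed.
Lemma vb_zero a : vb a (0 : ps K). Proof. by []. Qed.

Lemma vb_exp a f n : vb a f -> vb (a * n) (f ^+ n).
Proof.
move=> H; elim: n => [|n IH]; first by rewrite muln0.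
by rewrite exprS mulnS; apply: vb_mul.
Qed.

Lemma coef_exp_vb a f n : vb a f -> (f ^+ n) (a * n)%N = (f a) ^+ n.
Proof.
move=> H; elim: n => [|n IH]; first by rewrite muln0 expr0.
by rewrite exprS mulnS coef_mul_vb // ?IH ?exprS //; apply: vb_exp.
Qed.

Lemma ps_ord f : f <> 0 -> exists r, f r != 0 /\ vb r f.
Proof.
move=> Hf.
have Hex : exists r, f r != 0.
  apply: contrapT => Hn; apply: Hf; apply: funext => n.
  by apply/eqP; apply: contrapT => Hne; apply: Hn; exists n; apply/negP.
exists (ex_minn Hex); case: ex_minnP => r Hr Hmin; split => // i Hi.
apply/eqP; apply: contrapT => /negP Hne; have := Hmin i Hne; rewrite leqNgt Hi.
by [].
Qed.

Lemma ps_mul_eq0 f g : f * g = 0 -> f = 0 \/ g = 0.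
Proof.
move=> H; case: (pselect (f = 0)) => [|Hf]; [by left|right].
apply: contrapT => Hg.
have [a [Ha Hfa]] := ps_ord Hf; have [b [Hb Hgb]] := ps_ord Hg.
have := coef_mul_vb Hfa Hgb; rewrite H coef0 => /esym/eqP.
by rewrite mulf_eq0 (negbTE Ha) (negbTE Hb).
Qed.

Lemma coef_constM c f n : (ps_const c * f) n = c * f n.
Proof.
rewrite mulE /ps_mul big_ord_recl /= subn0 big1 ?addr0 // => i _.
by rewrite /= mul0r.
Qed.

Lemma ps_constD a b : ps_const (a + b) = ps_const a + ps_const b :> ps K.
Proof. by apply: funext => -[|n]; rewrite coefD /= ?addr0. Qed.
Lemma ps_constN a : ps_const (- a) = - ps_const a :> ps K.
Proof. by apply: funext => -[|n]; rewrite coefN /= ?oppr0. Qed.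
Lemma ps_const0 : ps_const 0 = 0 :> ps K.
Proof. by apply: funext => -[|n]. Qed.
Lemma ps_const1 : ps_const 1 = 1 :> ps K.
Proof. by apply: funext => -[|n]. Qed.
Lemma ps_constM a b : ps_const (a * b) = ps_const a * ps_const b :> ps K.
Proof. by apply: funext => n; rewrite coef_constM; case: n => [|n]; rewrite /= ?mulr0. Qed.
Lemma ps_constX a n : ps_const (a ^+ n) = ps_const a ^+ n :> ps K.
Proof. by elim: n => [|n IH]; rewrite ?ps_const1 // !exprS ps_constM IH. Qed.
Lemma ps_const_sum I (r : seq I) (P : pred I) (F : I -> K) :
  ps_const (\sum_(i <- r | P i) F i) = \sum_(i <- r | P i) ps_const (F i).
Proof. by apply: (big_morph (@ps_const K)) => //; [exact: ps_constD | exact: ps_const0]. Qed.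

Definition xpow (r : nat) : ps K := fun n => if n == r then 1 else 0.

Lemma coef_xpowM r f n : (xpow r * f) n = if (r <= n)%N then f (n - r)%N else 0.
Proof.
rewrite mulE /ps_mul; case: ifP => Hr.
  have Ha : (r < n.+1)%N by [].
  rewrite (bigD1 (Ordinal Ha)) //= /xpow eqxx mul1r big1 ?addr0 // => -[i /= Hi] Hne.
  rewrite /xpow ifF ?mul0r //; apply: contraNF Hne => /eqP Hir.
  by apply/eqP; apply: val_inj.
rewrite big1 // => -[i /= Hi] _; rewrite /xpow ifF ?mul0r //.
apply/negP => /eqP Hir; by rewrite Hir ltnS Hr in Hi.
Qed.

Lemma xpow_vb r : vb r (xpow r).
Proof. by move=> i Hi; rewrite /xpow ifF //; apply/negP => /eqP H; move: Hi; rewrite H ltnn. Qed.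

Lemma xpow_add a b : xpow a * xpow b = xpow (a + b).
Proof.
apply: funext => n; rewrite coef_xpowM /xpow; case: ifP => H.
  by congr (if _ then _ else _); apply/eqP/eqP; lia.
by rewrite ifF //; apply/negP => /eqP; lia.
Qed.

Lemma xpow0 : xpow 0 = 1.
Proof. by apply: funext => -[|n]. Qed.

Lemma xpowX a n : xpow a ^+ n = xpow (a * n).
Proof.
elim: n => [|n IH]; first by rewrite expr0 muln0 xpow0.
by rewrite exprS IH xpow_add mulnS.
Qed.

Lemma xpow_neq0 r : xpow r <> 0.
Proof. by move/(congr1 (fun f => f r)); rewrite /xpow eqxx => /eqP; rewrite oner_eq0. Qed.

Definition shift (r : nat) f : ps K := fun n => f (n + r)%N.

Lemma shiftK r f : vb r f -> xpow r * shift r f = f.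
Proof.
move=> H; apply: funext => n; rewrite coef_xpowM; case: ifP => Hr.
  by rewrite /shift subnK.
by rewrite H //; move: Hr; rewrite leqNgt => /negbFE.
Qed.

End Ps2.
Arguments xpow {K} r.

Section Ps3.
Variable K : fieldType.
Implicit Types f g h : ps K.

Section Inv.
Variable u : ps K.
Hypothesis u0 : u 0%N != 0.

Fixpoint invl (n : nat) : nat -> K :=
  match n with
  | 0 => fun _ => 0
  | n'.+1 => fun j => if j == n' then
        (if n' is 0 then (u 0%N)^-1 else - (u 0%N)^-1 * \sum_(i < n') u (n' - i)%N * invl n' i)
      else invl n' j
  end.

Definition psinv : ps K := fun j => invl j.+1 j.

Lemma invlS n j : invl n.+1 j = if j == n then
        (if n is 0 then (u 0%N)^-1 else - (u 0%N)^-1 * \sum_(i < n) u (n - i)%N * invl n i)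
      else invl n j.
Proof. by []. Qed.

Lemma invl_stable n j : (j < n)%N -> invl n j = psinv j.
Proof.
elim: n => // n IH Hj; rewrite invlS; case: eqP => [->|Hne]; first by rewrite /psinv invlS eqxx.
apply: IH; move: Hj; rewrite ltnS leq_eqVlt => /orP [/eqP Hjn|//].
by exfalso; apply: Hne.
Qed.

Lemma psinvS n : psinv n.+1 = - (u 0%N)^-1 * \sum_(i < n.+1) u (n.+1 - i)%N * psinv i.
Proof.
rewrite {1}/psinv invlS eqxx; congr (_ * _); apply: eq_bigr => -[i Hi] _.
by rewrite (invl_stable Hi).
Qed.

Lemma psinvK : psinv * u = 1.
Proof.
apply: funext => -[|n]; rewrite mulE /ps_mul.
  by rewrite big_ord_recl big_ord0 addr0 /psinv /= mulVf.
rewrite big_ord_recr /= subnn psinvS oneE /ps_one.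
rewrite mulrAC mulNr mulVf // mulN1r.
have -> : \sum_(i < n.+1) psinv i * u (n.+1 - i)%N = \sum_(i < n.+1) u (n.+1 - i)%N * psinv i.
  by apply: eq_bigr => i _; rewrite mulrC.
by rewrite addrN.
Qed.
End Inv.

Lemma ps_unit_inv (u : ps K) : u 0%N != 0 -> exists v, v * u = 1.
Proof. by move=> H; exists (psinv u); apply: psinvK. Qed.

Lemma ps_div g y r : g r != 0 -> vb r g -> vb r y -> exists d, y = d * g.
Proof.
move=> Hg Hvg Hvy.
have Hu : (shift r g) 0%N != 0 by rewrite /shift add0n.
have [v Hv] := ps_unit_inv Hu.
exists (shift r y * v).
rewrite -{1}(shiftK Hvy) -(shiftK Hvg).
by rewrite -mulrA [v * _]mulrCA Hv mulr1 mulrC.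
Qed.

Lemma ps_div_vb g y r s : g r != 0 -> vb r g -> vb (r + s) y ->
  exists d, vb s d /\ y = d * g.
Proof.
move=> Hg Hvg Hvy.
have [d Hd] := ps_div Hg Hvg (vb_le (leq_addr s r) Hvy).
exists d; split => // i Hi; apply/eqP; apply: contrapT => /negP Hne.
have Hex : exists j, (j < s)%N && (d j != 0) by exists i; rewrite Hi Hne.
case: (ex_minnP Hex) => j /andP [Hjs Hdj] Hmin.
have Hvd : vb j d.
  move=> t Ht; apply/eqP; apply: contrapT => /negP Hdt.
  have := Hmin t; rewrite Hdt (ltn_trans Ht Hjs) => /(_ isT); by rewrite leqNgt Ht.
have := coef_mul_vb Hvd Hvg; rewrite -Hd Hvy; last by lia.
by move/esym/eqP; rewrite mulf_eq0 (negbTE Hdj) (negbTE Hg).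
Qed.

End Ps3.

Lemma minP (P : nat -> Prop) : (exists n, P n) -> exists n, P n /\ forall j, P j -> (n <= j)%N.
Proof.
move=> [n Hn]; have Hex : exists n, `[< P n >] by exists n; apply/asboolP.
case: (ex_minnP Hex) => r /asboolP Hr Hmin; exists r; split => // j Hj.
by apply: Hmin; apply/asboolP.
Qed.

Lemma natr_ps (K : fieldType) n : (n%:R : ps K) = ps_const (n%:R).
Proof.
elim: n => [|n IH]; first by rewrite !mulr0n ps_const0.
by rewrite !mulrS ps_constD IH ps_const1.
Qed.

Section DSec.
Variable K : fieldType.
Variable k : K -> Prop.
Variables (p m : nat) (D : ps K -> Prop).
Hypothesis Hk : is_subfield k.
Hypothesis Hp : p \in [pchar K].
Hypothesis HD : is_subring D.
Hypothesis HkD : forall f, k_plus_XmKX k m f -> D f.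
Implicit Types f g h : ps K.

Lemma k1 : k 1. Proof. by case: Hk. Qed.
Lemma k_sub a b : k a -> k b -> k (a - b). Proof. by case: Hk => _ [H _]; apply: H. Qed.
Lemma k_mul a b : k a -> k b -> k (a * b). Proof. by case: Hk => _ [_ [H _]]; apply: H. Qed.
Lemma k_inv a : k a -> a != 0 -> k a^-1. Proof. by case: Hk => _ [_ [_ H]]; apply: H. Qed.
Lemma k0 : k 0. Proof. by rewrite -(subrr 1); apply: k_sub; apply: k1. Qed.
Lemma k_opp a : k a -> k (- a). Proof. by move=> H; rewrite -sub0r; apply: k_sub => //; apply: k0. Qed.
Lemma k_add a b : k a -> k b -> k (a + b).
Proof. by move=> Ha Hb; rewrite -[b]opprK; apply: k_sub => //; apply: k_opp. Qed.
Lemma k_div a b : k a -> k b -> b != 0 -> k (a / b).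
Proof. by move=> Ha Hb Hb0; apply: k_mul => //; apply: k_inv. Qed.

Lemma D1 : D 1. Proof. by case: HD. Qed.
Lemma D_sub f g : D f -> D g -> D (f - g). Proof. by case: HD => _ [H _]; apply: H. Qed.
Lemma D_mul f g : D f -> D g -> D (f * g). Proof. by case: HD => _ [_ H]; apply: H. Qed.
Lemma D0 : D 0. Proof. by rewrite -(subrr (1 : ps K)); apply: D_sub; apply: D1. Qed.
Lemma D_opp f : D f -> D (- f). Proof. by move=> H; rewrite -sub0r; apply: D_sub => //; apply: D0. Qed.
Lemma D_add f g : D f -> D g -> D (f + g).
Proof. by move=> Ha Hb; rewrite -[g]opprK; apply: D_sub => //; apply: D_opp. Qed.
Lemma D_exp f n : D f -> D (f ^+ n).
Proof. by move=> H; elim: n => [|n IH]; [apply: D1 | rewrite exprS; apply: D_mul]. Qed.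
Lemma D_sum (I : Type) (r : seq I) (P : pred I) (F : I -> ps K) :
  (forall i, P i -> D (F i)) -> D (\sum_(i <- r | P i) F i).
Proof. by move=> H; apply: big_ind => //; [apply: D0 | apply: D_add]. Qed.

Lemma D_const c : k c -> D (ps_const c).
Proof.
move=> Hc; apply: HkD; exists c, (0 : ps K); split => //; split => //.
by rewrite -addE addr0.
Qed.

Lemma D_vb f : vb m f -> D f.
Proof.
move=> Hf; apply: HkD; exists 0, f; split; first exact: k0.
by split => //; rewrite -addE ps_const0 add0r.
Qed.

Lemma D_vbS f : vb m.+1 f -> D f.
Proof. by move=> H; apply: D_vb; apply: vb_le H. Qed.

Lemma p_prime : prime p. Proof. exact: pcharf_prime Hp. Qed.

Lemma pchar_ps : p \in [pchar (ps K)].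
Proof.
apply/andP; split; first exact: p_prime.
by rewrite natr_ps (pcharf0 Hp) ps_const0.
Qed.

Definition q := (p ^ m)%N.

Lemma q_gt0 : (0 < q)%N. Proof. by rewrite expn_gt0 prime_gt0 // p_prime. Qed.
Lemma m_le_q : (m <= q)%N.
Proof. by apply: ltnW; apply: ltn_expl; apply: prime_gt1; apply: p_prime. Qed.

Lemma frob f g : (f + g) ^+ q = f ^+ q + g ^+ q.
Proof.
apply: exprDn_pchar; rewrite pnatX pnatE ?p_prime //.
by rewrite pchar_ps.
Qed.

Lemma residue_D f : D f -> residue D (f 0%N).
Proof. by move=> H; exists f. Qed.

Lemma k_residue c : k c -> residue D c.
Proof. by move=> H; exists (ps_const c); split => //; apply: D_const. Qed.

Lemma pow_to_D f n : residue D ((f 0%N) ^+ n) -> D (f ^+ (n * q)).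
Proof.
move=> [g [Dg Hg0]]; rewrite exprM.
have -> : f ^+ n = g + (f ^+ n - g) by rewrite addrC subrK.
rewrite frob; apply: D_add; first exact: D_exp.
apply: D_vb; apply: (vb_le m_le_q).
have := @vb_exp _ 1 (f ^+ n - g) q; rewrite mul1n; apply.
by move=> i; rewrite ltnS leqn0 => /eqP ->; rewrite coefB coefX0 Hg0 subrr.
Qed.

Hypothesis Hroot : root_ext k (@fullK K).

Lemma root_pow f : exists N, (0 < N)%N /\ D (f ^+ N).
Proof.
have [n [Hn Hkn]] := @Hroot (f 0%N) I.
exists (n * q)%N; split; first by rewrite muln_gt0 Hn q_gt0.
by apply: pow_to_D; apply: k_residue.
Qed.

Lemma D_unit f : D f -> f 0%N != 0 -> exists v, D v /\ v * f = 1.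
Proof.
move=> Df Hf0; have [v Hv] := ps_unit_inv Hf0.
have [[|N] [HN DvN]] := root_pow v; first by [].
exists v; split => //.
have -> : v = v ^+ N.+1 * f ^+ N.
  by rewrite exprS -mulrA -exprMn Hv expr1n mulr1.
by apply: D_mul => //; apply: D_exp.
Qed.

Lemma residue_mul a b : residue D a -> residue D b -> residue D (a * b).
Proof.
move=> [f [Df <-]] [g [Dg <-]]; exists (f * g); split; first exact: D_mul.
by rewrite coefM0.
Qed.

Lemma residue_inv a : residue D a -> a != 0 -> residue D a^-1.
Proof.
move=> [f [Df Hf]] Ha; have Hf0 : f 0%N != 0 by rewrite Hf.
have [v [Dv Hv]] := D_unit Df Hf0.
exists v; split => //; have := congr1 (fun g => g 0%N) Hv; rewrite coefM0 Hf /=.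
rewrite coef1 => H; by rewrite -[v 0%N]mulr1 -(mulfV Ha) mulrA H mul1r.
Qed.

Lemma maxM_ideal : ideal D (maxM D).
Proof.
split; first by move=> x [].
split; first by split => //; apply: D0.
split; first by move=> x y [Dx Hx] [Dy Hy]; split; [apply: D_add | rewrite -addE coefD Hx Hy addr0].
move=> d x Dd [Dx Hx]; split; first exact: D_mul.
by rewrite -mulE coefM0 Hx mulr0.
Qed.

Lemma ideal_unit I f : ideal D I -> I f -> D f -> f 0%N != 0 -> I (@ps_one K).
Proof.
move=> [_ [_ [_ Hmul]]] If Df Hf0; have [v [Dv Hv]] := D_unit Df Hf0.
by rewrite -oneE -Hv; apply: Hmul.
Qed.

Lemma maxM_unique : unique_max_ideal D (maxM D).
Proof.
have HM : max_ideal D (maxM D).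
  split; first exact: maxM_ideal.
  split; first by move=> [_ /eqP]; rewrite oner_eq0.
  move=> J HJ HMJ; case: (pselect (forall x, J x -> maxM D x)) => H.
    by left => x; split; [apply: H | apply: HMJ].
  right; have [x Hx] := (existsNP _).2 H; have [Jx Mx] := (not_implyP _ _).1 Hx.
  have Dx : D x by case: HJ => H1 _; apply: H1.
  apply: (ideal_unit HJ Jx Dx); apply/negP => /eqP Hx0; by apply: Mx.
split => // J [HJ [HJ1 HJmax]].
have JM : forall x, J x -> maxM D x.
  move=> x Jx; have Dx : D x by case: HJ => H1 _; apply: H1.
  split => //; apply/eqP; apply: contrapT => /negP Hx0.
  by apply: HJ1; apply: (ideal_unit HJ Jx Dx).
case: (HJmax _ maxM_ideal JM) => [H|H].
  by move=> x; split; [apply: JM | move/H].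
by case: H => _ /eqP; rewrite oner_eq0.
Qed.

Lemma quasilocal_D : quasilocal D.
Proof. by exists (maxM D); apply: maxM_unique. Qed.

Lemma AV_D : AV_domain D.
Proof.
move=> a b Da Db Ha Hb.
have [ra [Hra Hva]] := ps_ord Ha; have [rb [Hrb Hvb]] := ps_ord Hb.
case: (leqP ra rb) => Hr.
  have [e He] := ps_div Hra Hva (vb_le Hr Hvb).
  have [N [HN De]] := root_pow e; exists N; split => //; left.
  exists (e ^+ N); split => //; rewrite !expE He exprMn mulrC //.
have [e He] := ps_div Hrb Hvb (vb_le (ltnW Hr) Hva).
have [N [HN De]] := root_pow e; exists N; split => //; right.
exists (e ^+ N); split => //; rewrite !expE He exprMn mulrC //.
Qed.


Lemma gen_in S x : S x -> gen_ideal D S x.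
Proof. by move=> Sx I HI HS; apply: HS. Qed.

Lemma API_of_pow N : (0 < N)%N -> (forall f, D (f ^+ N)) -> API_domain D.
Proof.
move=> HN Hpow S HS [s1 Ss1].
pose P r := exists s, S s /\ s r != 0 /\ vb r s.
have [r0 [[s0 [Ss0 [Hs0r Hs0v]]] Hmin]] : exists r, P r /\ forall j, P j -> (r <= j)%N.
  apply: minP; have [_ Hs1] := HS _ Ss1; have [r Hr] := ps_ord Hs1.
  by exists r, s1.
have Hdiv : forall s, S s -> exists e, s = e * s0.
  move=> s Ss; have [_ Hs] := HS _ Ss; have [r [Hr Hvr]] := ps_ord Hs.
  have Hle := Hmin r (ex_intro _ s (conj Ss (conj Hr Hvr))).
  exact: ps_div Hs0r Hs0v (vb_le Hle Hvr).
have Ds0 : D s0 by case: (HS _ Ss0).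
exists N; split => //; exists (ps_exp s0 N); split; first by rewrite expE; apply: D_exp.
move=> x; split.
  move=> Hx; apply: (Hx (fun x => exists d, D d /\ x = ps_mul d (ps_exp s0 N))).
    split; first by move=> y [d [Dd ->]]; apply: D_mul => //; rewrite expE; apply: D_exp.
    split; first by exists 0; split; [apply: D0 | rewrite -mulE mul0r].
    split.
      move=> y z [d1 [D1 ->]] [d2 [D2 ->]]; exists (d1 + d2); split; first exact: D_add.
      by rewrite -addE -!mulE mulrDl.
    move=> d y Dd [d1 [D1 ->]]; exists (d * d1); split; first exact: D_mul.
    by rewrite -!mulE mulrA.
  move=> y [s [Ss ->]]; have [e He] := Hdiv _ Ss; exists (e ^+ N); split => //.
  by rewrite -mulE !expE He exprMn.
move=> [d [Dd ->]] I [_ [_ [_ Hmul]]] HIS; apply: Hmul => //.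
by apply: HIS; exists s0.
Qed.

Lemma intclos : integral_closure_is_KX D.
Proof.
split.
  move=> f; have [N0 [HN0 DfN0]] := root_pow f.
  case: N0 HN0 DfN0 => [//|N] HN DfN.
  exists (xpow m.+1 * f), (xpow m.+1); split.
    by apply: D_vbS; apply: vb_mull; apply: xpow_vb.
  split; first by apply: D_vbS; apply: xpow_vb.
  split; first exact: xpow_neq0.
  split => //.
  exists N.+1, (fun i => if i == 0%N then - f ^+ N.+1 else 0); split => //.
  split; first by move=> [|i] /=; [apply: D_opp | apply: D0].
  rewrite sumE big_ord_recl /= big1; last by move=> i _; rewrite /= -mulE mul0r.
  rewrite -addE -!mulE -oneE -zeroE !expE -!exprS exprMn mul1r addr0 mulNr.
  by rewrite [f ^+ _ * _]mulrC subrr.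
move=> a b Da Db Hb Hint.
case: (pselect (a = 0)) => [->|Ha]; first by exists 0; rewrite -mulE mulr0.
have [ra [Hra Hva]] := ps_ord Ha; have [rb [Hrb Hvb]] := ps_ord Hb.
case: (leqP rb ra) => Hr.
  have [d Hd] := ps_div Hrb Hvb (vb_le Hr Hva).
  by exists d; rewrite -mulE mulrC.
exfalso; move: Hint => [n [c [Hn [Dc Heq]]]].
have := congr1 (fun f => f (ra * n)%N) Heq.
rewrite -addE sumE coefD coef_sum big1; last first.
  move=> [i /= Hi] _; rewrite -!mulE !expE.
  have Hv := vb_mul (vb_exp (n:=i) Hva) (vb_exp (n:=(n - i)%N) Hvb).
  apply: (vb_mulr _ Hv).
  have Hni : (0 < n - i)%N by rewrite subn_gt0.
  have H1 : (ra * (n - i) < rb * (n - i))%N by rewrite ltn_pmul2r.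
  have H2 : (ra * n = ra * i + ra * (n - i))%N by rewrite -mulnDr subnKC // ltnW.
  lia.
rewrite addr0 expE coef_exp_vb // => /eqP.
by rewrite /ps_zero expf_eq0 (negbTE Hra) andbF.
Qed.


Lemma part3 : (unique_max_ideal D (maxM D) /\ API_domain D) <->
      bounded_root_ext (residue D) (@fullK K).
Proof.
split; last first.
  move=> [n [Hn Hb]]; split; first exact: maxM_unique.
  apply: (@API_of_pow (n * q)); first by rewrite muln_gt0 Hn q_gt0.
  by move=> f; apply: pow_to_D; apply: Hb.
move=> [_ HAPI].
pose S := fun s : ps K => exists c, c != 0 /\ s = ps_const c * xpow m.+1.
have HSc : forall (c : K) (n : nat), (ps_const c * xpow m.+1) ^+ n = ps_const (c ^+ n) * xpow (m.+1 * n).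
  by move=> c n; rewrite exprMn ps_constX xpowX.
have Hcoef : forall (c : K) (n : nat), (ps_const (c ^+ n) * xpow (m.+1 * n)) (m.+1 * n)%N = c ^+ n.
  by move=> c n; rewrite coef_constM /xpow eqxx mulr1.
have [n [Hn [g [Dg Hg]]]] : exists n, (0 < n)%N /\
   principal D (gen_ideal D (fun y => exists s, S s /\ y = ps_exp s n)).
  apply: HAPI.
    move=> s [c [Hc ->]]; split.
      by apply: D_vbS; apply: vb_mulr; apply: xpow_vb.
    move=> /(congr1 (fun f => f m.+1)); rewrite coef_constM /xpow eqxx mulr1 => Hc0.
    by move: Hc; rewrite Hc0 eqxx.
  by exists (ps_const 1 * xpow m.+1), 1; rewrite oner_eq0.
set R := (m.+1 * n)%N.
have Hgen : forall c : K, c != 0 -> exists d, D d /\ ps_const (c ^+ n) * xpow R = d * g.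
  move=> c Hc; apply: (proj1 (Hg _)) => I HI HIS; apply: HIS.
  by exists (ps_const c * xpow m.+1); split; [exists c | rewrite expE HSc].
have Hvg : vb R g.
  have Hgg : gen_ideal D (fun y => exists s, S s /\ y = ps_exp s n) g.
    by apply: (proj2 (Hg g)); exists 1; split; [apply: D1 | rewrite -mulE mul1r].
  have [] := Hgg (fun x => D x /\ vb R x) => //.
    split; first by move=> x [].
    split; first by split; [apply: D0 | apply: vb_zero].
    split; first by move=> x y [Dx Hx] [Dy Hy]; split; [apply: D_add | apply: vb_add].
    by move=> d x Dd [Dx Hx]; split; [apply: D_mul | apply: vb_mulr].
  move=> y [s [[c [Hc ->]] ->]]; rewrite expE HSc; split.
    apply: D_vbS; apply: vb_mulr; apply: (vb_le (leq_pmulr _ Hn)); exact: xpow_vb.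
  by apply: vb_mulr; apply: xpow_vb.
have Hc0 : forall (c : K) (d : ps K), D d -> ps_const (c ^+ n) * xpow R = d * g -> c ^+ n = d 0%N * g R.
  move=> c d Dd /(congr1 (fun f => f R)); rewrite Hcoef -[R]add0n coef_mul_vb //.
have [d1 [Dd1 Hd1]] := Hgen 1 (oner_neq0 _).
have H1 := Hc0 _ _ Dd1 Hd1; rewrite expr1n in H1.
have Hd10 : d1 0%N != 0 by apply/negP => /eqP H0; move: H1; rewrite H0 mul0r => /eqP; rewrite oner_eq0.
exists n; split => // c _; case: (eqVneq c 0) => [->|Hc].
  rewrite expr0n gtn_eqF //; have := residue_D D0; by rewrite coef0.
have [dc [Ddc Hdc]] := Hgen c Hc; rewrite (Hc0 _ _ Ddc Hdc).
have -> : g R = (d1 0%N)^-1 by rewrite -[g R]mul1r -(mulVf Hd10) -mulrA -H1 mulr1.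
apply: residue_mul; first exact: residue_D.
by apply: residue_inv => //; apply: residue_D.
Qed.


Inductive in_span (ws : seq (ps K)) : ps K -> Prop :=
| span0 : in_span ws 0
| spanS c w x : k c -> w \in ws -> in_span ws x -> in_span ws (ps_const c * w + x).

Lemma span_add ws x y : in_span ws x -> in_span ws y -> in_span ws (x + y).
Proof.
elim => [|c w x' Hc Hw Hx IH] Hy; first by rewrite add0r.
by rewrite -addrA; apply: spanS => //; apply: IH.
Qed.

Lemma span_scale ws a x : k a -> in_span ws x -> in_span ws (ps_const a * x).
Proof.
move=> Ha; elim => [|c w x' Hc Hw Hx IH]; first by rewrite mulr0; apply: span0.
by rewrite mulrDr mulrA -ps_constM; apply: spanS => //; apply: k_mul.
Qed.

Lemma span_sub ws x y : in_span ws x -> in_span ws y -> in_span ws (x - y).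
Proof.
move=> Hx Hy; apply: span_add => //.
have -> : - y = ps_const (-1) * y by rewrite ps_constN ps_const1 mulN1r.
by apply: span_scale => //; apply: k_opp; apply: k1.
Qed.

Lemma span_cons ws w0 x : in_span ws x -> in_span (w0 :: ws) x.
Proof.
elim => [|c w x' Hc Hw Hx IH]; first exact: span0.
by apply: spanS => //; rewrite in_cons Hw orbT.
Qed.

Lemma span_decomp w ws y : in_span (w :: ws) y ->
  exists c y', k c /\ in_span ws y' /\ y = ps_const c * w + y'.
Proof.
elim => [|c w1 x Hc Hw1 Hx [c' [x' [Hc' [Hx' ->]]]]].
  by exists 0, 0; split; [apply: k0 | split; [apply: span0 | rewrite ps_const0 mul0r addr0]].
move: Hw1; rewrite in_cons => /orP [/eqP ->|Hw1].
  exists (c + c'), x'; split; first exact: k_add.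
  by split => //; rewrite ps_constD mulrDl addrA.
exists c', (ps_const c * w1 + x'); split => //; split; first exact: spanS.
by rewrite addrCA.
Qed.

Lemma LA N (ws : seq (ps K)) : forall (V : ps K -> Prop),
  V 0 -> (forall x y, V x -> V y -> V (x + y)) ->
  (forall a x, k a -> V x -> V (ps_const a * x)) ->
  (forall x, V x -> exists y, in_span ws y /\ vb N (x - y)) ->
  exists vs, (forall v, v \in vs -> V v) /\
     forall x, V x -> exists y, in_span vs y /\ vb N (x - y).
Proof.
elim: ws => [|w ws IH] V V0 Vadd Vscale HV.
  by exists [::]; split.
case: (pselect (forall x, V x -> exists y, in_span ws y /\ vb N (x - y))) => Hc.
  have [vs [Hvs Hvs2]] := IH V V0 Vadd Vscale Hc.
  exists vs; split => // x Vx; exact: Hvs2.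
have [v Hv] := (existsNP _).2 Hc; have [Vv Hnv] := (not_implyP _ _).1 Hv.
have [y0 [Hy0 Hvy0]] := HV v Vv.
have [c0 [y0' [Hc0 [Hy0' Ey0]]]] := span_decomp Hy0.
have Hc0n : c0 != 0.
  apply/negP => /eqP Hc00; apply: Hnv; exists y0'; split => //.
  by move: Hvy0; rewrite Ey0 Hc00 ps_const0 mul0r add0r.
pose V' := fun x => V x /\ exists y, in_span ws y /\ vb N (x - y).
have [vs [Hvs Hvs2]] : exists vs, (forall v, v \in vs -> V' v) /\
     forall x, V' x -> exists y, in_span vs y /\ vb N (x - y).
  apply: IH.
  - by split => //; exists 0; split; [apply: span0 | rewrite subrr].
  - move=> x y [Vx [y1 [Hy1 Hxy1]]] [Vy [y2 [Hy2 Hxy2]]]; split; first exact: Vadd.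
    exists (y1 + y2); split; first exact: span_add.
    have -> : x + y - (y1 + y2) = (x - y1) + (y - y2) by ring.
    exact: vb_add.
  - move=> a x Ha [Vx [y1 [Hy1 Hxy1]]]; split; first exact: Vscale.
    exists (ps_const a * y1); split; first exact: span_scale.
    by rewrite -mulrBr; apply: vb_mulr.
  - by move=> x [].
exists (v :: vs); split.
  by move=> u; rewrite in_cons => /orP [/eqP ->|/Hvs []].
move=> x Vx; have [y [Hy Hxy]] := HV x Vx.
have [a [y' [Ha [Hy' Ey]]]] := span_decomp Hy.
set t := a / c0.
have Ht : k t by apply: k_div.
have [x' Ex'] : exists x', x' = x + ps_const (- t) * v by eexists.
have Vx' : V' x'.
  split; first by rewrite Ex'; apply: Vadd => //; apply: Vscale => //; apply: k_opp.
  exists (y' + ps_const (- t) * y0'); split.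
    by apply: span_add => //; apply: span_scale => //; apply: k_opp.
  have Ea : ps_const a = ps_const t * ps_const c0 by rewrite -ps_constM /t divfK.
  have -> : x' - (y' + ps_const (- t) * y0') = (x - y) + ps_const (- t) * (v - y0).
    rewrite Ex' Ey Ey0 Ea ps_constN; ring.
  by apply: vb_add => //; apply: vb_mulr.
have [y'' [Hy'' Hxy'']] := Hvs2 x' Vx'.
exists (ps_const t * v + y''); split.
  by apply: spanS => //; [rewrite in_cons eqxx | apply: span_cons].
have -> : x - (ps_const t * v + y'') = x' - y'' by rewrite Ex' ps_constN; ring.
exact: Hxy''.
Qed.

Lemma coef_xpow r n : (xpow r : ps K) n = if n == r then 1 else 0.
Proof. by []. Qed.

Lemma finite_span (Hfin : finite_degree k) N : exists ws : seq (ps K),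
  forall x, exists y, in_span ws y /\ vb N (x - y).
Proof.
move: Hfin => [ne [e He]].
exists [seq ps_const (e j) * xpow i | i <- iota 0 N, j <- iota 0 ne].
move=> x; exists (\sum_(i < N) ps_const (x i) * xpow i); split.
  apply: big_ind; [exact: span0 | exact: span_add | move=> [i /= Hi] _].
  have [c [Hc ->]] := He (x i).
  rewrite ps_const_sum mulr_suml; apply: big_ind; [exact: span0 | exact: span_add|].
  move=> [j /= Hj] _; rewrite ps_constM -mulrA -[X in in_span _ X]addr0.
  apply: spanS => //; last exact: span0.
  by apply: allpairs_f; rewrite mem_iota add0n.
move=> t Ht; rewrite coefB coef_sum.
rewrite (bigD1 (Ordinal Ht)) //= coef_constM coef_xpow eqxx mulr1 big1 ?addr0 ?subrr //.
move=> [i /= Hi] Hne; rewrite coef_constM coef_xpow ifF ?mulr0 //.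
by apply: contraNF Hne => /eqP Hti; apply/eqP; apply: val_inj => /=.
Qed.

Lemma noeth (Hfin : finite_degree k) : noetherian D.
Proof.
move=> I HI; have [HID [HI0 [HIadd HImul]]] := HI.
case: (pselect (exists g : ps K, I g /\ g <> 0)) => [Hex|Hno]; last first.
  exists 0%N, (fun _ => 0) => x; split.
    move=> Ix J [_ [HJ0 _]] _.
    have -> : x = 0 by apply: contrapT => Hx; apply: Hno; exists x.
    exact: HJ0.
  by move=> Hx; apply: (Hx I) => // s [i []]; rewrite ltn0.
have [g [Ig Hg0]] := Hex.
have [r [Hgr Hvg]] := ps_ord Hg0.
have [ws Hws] := finite_span Hfin (r + m.+1).
have [vs [Hvs Hvs2]] := @LA (r + m.+1) ws I HI0 HIadd
   (fun a x Ha Ix => HImul _ _ (D_const Ha) Ix) (fun x _ => Hws x).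
exists (size vs).+1, (fun i => nth 0 (g :: vs) i) => x; split; last first.
  move=> Hx; apply: Hx => // s [[|i] [Hi ->]] //=.
  by apply: Hvs; apply: mem_nth.
move=> Ix J HJ HJS; have [HJD [HJ0 [HJadd HJmul]]] := HJ.
have [y [Hy Hxy]] := Hvs2 x Ix.
have [d [Hvd Ed]] := ps_div_vb Hgr Hvg Hxy.
have Jy : J y.
  elim: Hy => [|c w x' Hc Hw Hx' IHx]; first exact: HJ0.
  apply: HJadd => //; apply: HJmul; first exact: D_const.
  apply: HJS; exists (index w vs).+1; split; first by rewrite ltnS index_mem.
  by rewrite /= nth_index.
have -> : x = d * g + y by rewrite -Ed subrK.
apply: HJadd => //; apply: HJmul; first exact: D_vbS.
by apply: HJS; exists 0%N.
Qed.

Lemma ideal_pow_vb t x : ideal_pow D (maxM D) t x -> D x /\ vb t x.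
Proof.
elim: t x => [|t IH] x /=; first by move=> Dx; split.
move=> Hx; apply: (Hx (fun y => D y /\ vb t.+1 y)).
  split; first by move=> y [].
  split; first by split; [apply: D0 | apply: vb_zero].
  split; first by move=> y z [Dy Hy] [Dz Hz]; split; [apply: D_add | apply: vb_add].
  by move=> d y Dd [Dy Hy]; split; [apply: D_mul | apply: vb_mulr].
move=> y [a [b [Ha [[Db Hb0] ->]]]]; have [Da Hva] := IH _ Ha.
split; first exact: D_mul.
rewrite -addn1; apply: vb_mul => // i; rewrite ltnS leqn0 => /eqP ->; exact: Hb0.
Qed.

Lemma vb_ideal_pow t x : vb (m.+1 * t.+1) x -> ideal_pow D (maxM D) t x.
Proof.
elim: t x => [|t IH] x Hx /=; first by apply: D_vbS; rewrite muln1 in Hx.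
apply: gen_in; exists (shift m.+1 x), (xpow m.+1); split.
  apply: IH => i Hi; rewrite /shift; apply: Hx; rewrite mulnS; lia.
split.
  split; first by apply: D_vbS; apply: xpow_vb.
  by rewrite coef_xpow.
rewrite -mulE mulrC shiftK //; apply: (vb_le _ Hx); rewrite mulnS; lia.
Qed.

Lemma complete_D : complete_adic D (maxM D).
Proof.
move=> u Du Hcau.
have [Nf HNf] := choice Hcau.
have [B HB] : exists B : nat -> nat, forall T n, (n < T)%N -> (Nf n.+1 <= B T)%N.
  exists (fun T => \max_(j < T) Nf j.+1)%N => T n Hn.
  exact: (@leq_bigmax _ (fun j : 'I_T => Nf j.+1) (Ordinal Hn)).
pose d : ps K := fun n => u (Nf n.+1) n.
have Hconv : forall T i, (B T <= i)%N -> vb T (u i - d).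
  move=> T i Hi n Hn; rewrite coefB /d; apply/eqP; rewrite subr_eq0; apply/eqP.
  have HBn := HB T n Hn.
  have := HNf n.+1 i (Nf n.+1) (leq_trans HBn Hi) (leqnn _).
  move/ideal_pow_vb => [_ Hv]; have := Hv n (ltnSn n); rewrite -subE coefB => /eqP.
  by rewrite subr_eq0 => /eqP.
exists d; split.
  have -> : d = u (B m.+1) - (u (B m.+1) - d) by ring.
  by apply: D_sub => //; apply: D_vbS; apply: Hconv.
move=> t; exists (B (m.+1 * t.+1)) => i Hi.
by apply: vb_ideal_pow; apply: Hconv.
Qed.


Lemma API_bounded : bounded_root_ext k (@fullK K) -> API_domain D.
Proof.
move=> [n [Hn Hb]]; apply: (@API_of_pow (n * q)); first by rewrite muln_gt0 Hn q_gt0.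
by move=> f; apply: pow_to_D; apply: k_residue; apply: Hb.
Qed.

End DSec.

Theorem theorem7 (K : fieldType) (k : K -> Prop) (p m : nat) (D : ps K -> Prop) :
  is_subfield k ->
  p \in [pchar K] ->
  is_subring D ->
  (forall f, k_plus_XmKX k m f -> D f) ->
  (* (i) *)
  (root_ext k (@fullK K) ->
     quasilocal D /\ AV_domain D /\ integral_closure_is_KX D) /\
  (* (ii) *)
  (bounded_root_ext k (@fullK K) ->
     quasilocal D /\ API_domain D /\ integral_closure_is_KX D) /\
  (* (iii) *)
  (root_ext k (@fullK K) ->
     ((unique_max_ideal D (maxM D) /\ API_domain D) <->
      bounded_root_ext (residue D) (@fullK K))) /\
  (* (iv) *)
  (finite_degree k ->
     (root_ext k (@fullK K) -> complete_local D /\ AV_domain D) /\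
     (bounded_root_ext k (@fullK K) -> complete_local D /\ API_domain D)).
Proof.
move=> Hk Hp HD HkD.
have Hbr : bounded_root_ext k (@fullK K) -> root_ext k (@fullK K).
  by move=> [n [Hn H]] x Hx; exists n; split => //; apply: H.
have Hcl : finite_degree k -> root_ext k (@fullK K) -> complete_local D.
  move=> Hfin Hr; split; first exact: (noeth Hk HkD Hfin).
  exists (maxM D); split; first exact: (maxM_unique Hk Hp HD HkD Hr).
  exact: (complete_D Hk Hp HD HkD).
split.
  move=> Hr; split; first exact: (quasilocal_D Hk Hp HD HkD Hr).
  split; first exact: (AV_D Hk Hp HD HkD Hr).
  exact: (intclos Hk Hp HD HkD Hr).
split.
  move=> Hb; have Hr := Hbr Hb.
  split; first exact: (quasilocal_D Hk Hp HD HkD Hr).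
  split; first exact: (API_bounded Hk Hp HD HkD Hb).
  exact: (intclos Hk Hp HD HkD Hr).
split.
  by move=> Hr; exact: (part3 Hk Hp HD HkD Hr).
move=> Hfin; split.
  move=> Hr; split; first exact: Hcl.
  exact: (AV_D Hk Hp HD HkD Hr).
move=> Hb; have Hr := Hbr Hb; split; first exact: Hcl.
exact: (API_bounded Hk Hp HD HkD Hb).
Qed.
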